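(* Fix $L\ge20$. For any pattern $(\mathbf a,\mathbf e)$ there exists $S\subseteq V(\Gamma)$ such that $p_{\mathrm{SD}}((\mathbf a,\mathbf e)_S)\ge p_{\mathrm{SD}}(\mathbf a,\mathbf e)-55L\sqrt d$ and, for all $(i,w)\in S$, \[\sum_{(i',w')\in N_{\Gamma_{\mathrm{SD}}}(i,w)\cap S}\frac{a_{i,w}a_{i',w'}}{n}\cdot\frac{\epsilon_{i,w,i',w'}^2}{15}\ge\frac L{10}\,a_{i,w}\log\Big(\frac{en}{a_{i,w}}\Big),\] where the right side is interpreted as $0$ when $a_{i,w}=0$.
   Context: $d\ge2$, $H$ is a $d$-regular graph on $[h]$. $D^{>0}=\{2^k/\sqrt{nh}:k\in\mathbb{Z},k\ge0\}$; $\Gamma$ is the graph on $[h]\times D^{>0}$ with $(i,w)\sim_\Gamma(i',w')$ iff $ii'\in E(H)$ and $w/w'\in(d^{-1/2},d^{1/2})$. A pattern is $(\mathbf a,\mathbf e)$: nonnegative integers $a_{i,w}$ with $\sum_wa_{i,w}\le n$ for each $i$, $\sum w^2a_{i,w}\le10$, some $w_0\in D^{>0}$ with $a_{i,w}=0$ unless $w_0\le w\le dw_0$; integers $e_{i,w,i',w'}$ for edges of $\Gamma$ (symmetric) with $0\le e\le\min(a_{i,w},a_{i',w'})$. Sub-pattern $(\mathbf a,\mathbf e)_S$: keep $a_{i,w}$ for $(i,w)\in S$ (else $0$) and $e$ on edges inside $S$ (else $0$). $\epsilon_{i,w,i',w'}=e_{i,w,i',w'}n/(a_{i,w}a_{i',w'})-1$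 if $a_{i,w},a_{i',w'}\ne0$, and $=1$ otherwise. $\Gamma_{\mathrm{SD}}=\Gamma_{\mathrm{SD}}(\mathbf a,\mathbf e)$ is the spanning subgraph of $\Gamma$ consisting of the edges with $-1\le\epsilon_{i,w,i',w'}\le e^2-1$, and $p_{\mathrm{SD}}(\mathbf a,\mathbf e)=\big|\sum_{(i,w)(i',w')\in E(\Gamma_{\mathrm{SD}})}\frac{ww'a_{i,w}a_{i',w'}}{n}\epsilon_{i,w,i',w'}\big|$ (with $\Gamma_{\mathrm{SD}}$ determined by the pattern in question). *)

(* Defs.v *)
From Stdlib Require Import Reals Lra Lia List.
From Stdlib Require Import Classical ClassicalDescription.
Import ListNotations.
Open Scope R_scope.

Definition sumR (m : nat) (f : nat -> R) : R :=
  fold_right Rplus 0 (map f (seq 0 m)).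

Definition indR (P : Prop) : R :=
  if excluded_middle_informative P then 1 else 0.

(* H: simple graph on [h] = {0,...,h-1} given by a boolean adjacency. *)
Definition simple_graph (adj : nat -> nat -> bool) : Prop :=
  (forall i j, adj i j = adj j i) /\ (forall i, adj i i = false).

Definition regular (h d : nat) (adj : nat -> nat -> bool) : Prop :=
  forall i, (i < h)%nat -> length (filter (fun j => adj i j) (seq 0 h)) = d.

(* The element w = 2^k / sqrt(n h) of D^{>0} is encoded by k : nat. *)
Definition wt (n h k : nat) : R := 2 ^ k / sqrt (INR n * INR h).

(* Vertex (i,k) of Gamma is (i, 2^k/sqrt(nh)) with i < h.
   Edges: ii' in E(H) and w/w' in (d^{-1/2}, d^{1/2}). *)
Definition GammaE (h d : nat) (adj : nat -> nat -> bool)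
    (i k i' k' : nat) : Prop :=
  (i < h)%nat /\ (i' < h)%nat /\ adj i i' = true /\
  / sqrt (INR d) < 2 ^ k / 2 ^ k' < sqrt (INR d).

Definition eps (n : nat) (a : nat -> nat -> nat)
    (e : nat -> nat -> nat -> nat -> nat) (i k i' k' : nat) : R :=
  if (Nat.eqb (a i k) 0 || Nat.eqb (a i' k') 0)%bool then 1
  else INR (e i k i' k') * INR n / (INR (a i k) * INR (a i' k')) - 1.

Definition SDE (h d : nat) (adj : nat -> nat -> bool) (n : nat)
    (a : nat -> nat -> nat) (e : nat -> nat -> nat -> nat -> nat)
    (i k i' k' : nat) : Prop :=
  GammaE h d adj i k i' k' /\
  -1 <= eps n a e i k i' k' <= exp 1 ^ 2 - 1.

(* Range of levels k summed over: k < K.  For a pattern with base level k0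
   (w0 = 2^k0/sqrt(nh)) the support lies in k0 <= k <= k0 + log2 d < K. *)
Definition Kb (k0 d : nat) : nat := (k0 + d + 1)%nat.

(* p_SD(a,e): sum over (unordered) edges of Gamma_SD = half the sum over
   ordered adjacent pairs (the summand is symmetric). *)
Definition pSD (h d : nat) (adj : nat -> nat -> bool) (n K : nat)
    (a : nat -> nat -> nat) (e : nat -> nat -> nat -> nat -> nat) : R :=
  Rabs (/ 2 *
    sumR h (fun i => sumR K (fun k => sumR h (fun i' => sumR K (fun k' =>
      indR (SDE h d adj n a e i k i' k') *
      (wt n h k * wt n h k' * INR (a i k) * INR (a i' k') / INR n
         * eps n a e i k i' k')))))).

(* (a,e) is a pattern with base level k0 (i.e. w0 = 2^k0/sqrt(nh)). *)
Definition is_pattern (h d : nat) (adj : nat -> nat -> bool) (n k0 : nat)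
    (a : nat -> nat -> nat) (e : nat -> nat -> nat -> nat -> nat) : Prop :=
  (forall i k, (i < h)%nat -> a i k <> 0%nat ->
      (k0 <= k)%nat /\ (2 ^ k <= d * 2 ^ k0)%nat) /\
  (forall i, (i < h)%nat -> sumR (Kb k0 d) (fun k => INR (a i k)) <= INR n) /\
  sumR h (fun i => sumR (Kb k0 d) (fun k => wt n h k ^ 2 * INR (a i k))) <= 10 /\
  (forall i k i' k', GammaE h d adj i k i' k' ->
      e i k i' k' = e i' k' i k /\
      (e i k i' k' <= Nat.min (a i k) (a i' k'))%nat).

Definition subA (S : nat -> nat -> bool) (a : nat -> nat -> nat) :
    nat -> nat -> nat :=
  fun i k => if S i k then a i k else 0%nat.

Definition subE (S : nat -> nat -> bool)
    (e : nat -> nat -> nat -> nat -> nat) : nat -> nat -> nat -> nat -> nat :=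
  fun i k i' k' => if (S i k && S i' k')%bool then e i k i' k' else 0%nat.

Definition alog (n a : nat) : R :=
  if Nat.eqb a 0 then 0 else INR a * ln (exp 1 * INR n / INR a).

(* Main.v *)
Require Import Defs.
From Stdlib Require Import Reals Lra Lia List.
From Stdlib Require Import Classical ClassicalDescription.
Open Scope R_scope.

Lemma sumR_0 f : sumR 0 f = 0.
Proof. reflexivity. Qed.

Lemma sumR_S m f : sumR (S m) f = sumR m f + f m.
Proof.
  unfold sumR. rewrite seq_S, map_app, fold_right_app. simpl.
  generalize (f m). intro c.
  induction (map f (seq 0 m)) as [|x l IH]; simpl; lra.
Qed.

Lemma sumR_ext m f g : (forall k, (k < m)%nat -> f k = g k) -> sumR m f = sumR m g.
Proof.
  induction m; intros H. reflexivity.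
  rewrite !sumR_S, IHm, H; auto; intros; apply H; lia.
Qed.

Lemma sumR_le m f g : (forall k, (k < m)%nat -> f k <= g k) -> sumR m f <= sumR m g.
Proof.
  induction m; intros H. rewrite !sumR_0; lra.
  rewrite !sumR_S. assert (sumR m f <= sumR m g) by (apply IHm; intros; apply H; lia).
  specialize (H m ltac:(lia)). lra.
Qed.

Lemma sumR_nonneg m f : (forall k, (k < m)%nat -> 0 <= f k) -> 0 <= sumR m f.
Proof.
  intros H. replace 0 with (sumR m (fun _ => 0)).
  apply sumR_le; auto.
  induction m. reflexivity. rewrite sumR_S, IHm; [lra|]. intros; apply H; lia.
Qed.

Lemma sumR_plus m f g : sumR m (fun k => f k + g k) = sumR m f + sumR m g.
Proof. induction m. rewrite !sumR_0; lra. rewrite !sumR_S, IHm; lra. Qed.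

Lemma sumR_minus m f g : sumR m (fun k => f k - g k) = sumR m f - sumR m g.
Proof. induction m. rewrite !sumR_0; lra. rewrite !sumR_S, IHm; lra. Qed.

Lemma sumR_scal m c f : sumR m (fun k => c * f k) = c * sumR m f.
Proof. induction m. rewrite !sumR_0; lra. rewrite !sumR_S, IHm; lra. Qed.

Lemma sumR_scal_r m c f : sumR m (fun k => f k * c) = sumR m f * c.
Proof. induction m. rewrite !sumR_0; lra. rewrite !sumR_S, IHm; lra. Qed.

Lemma sumR_abs m f : Rabs (sumR m f) <= sumR m (fun k => Rabs (f k)).
Proof.
  induction m. rewrite !sumR_0, Rabs_R0; lra.
  rewrite !sumR_S. eapply Rle_trans. apply Rabs_triang. lra.
Qed.

Lemma sumR_swap m p (f : nat -> nat -> R) :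
  sumR m (fun i => sumR p (fun j => f i j)) = sumR p (fun j => sumR m (fun i => f i j)).
Proof.
  induction m. rewrite sumR_0. symmetry. induction p. reflexivity.
  rewrite sumR_S, IHp, sumR_0. lra.
  rewrite sumR_S, IHm, <- sumR_plus. apply sumR_ext. intros. rewrite sumR_S. reflexivity.
Qed.

Lemma sumR_shift m f : sumR (S m) f = f 0%nat + sumR m (fun k => f (S k)).
Proof.
  induction m. rewrite sumR_S, !sumR_0. lra.
  rewrite sumR_S, IHm, sumR_S. lra.
Qed.

Definition b2R (b : bool) : R := if b then 1 else 0.

Lemma sumR_pick m j f : (j < m)%nat ->
  sumR m (fun k => b2R (Nat.eqb k j) * f k) = f j.
Proof.
  induction m; intros Hj. lia.
  rewrite sumR_S. destruct (Nat.eq_dec j m).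
  - subst. rewrite Nat.eqb_refl. unfold b2R.
    replace (sumR m _) with (sumR m (fun k => 0 * f k)).
    rewrite sumR_scal. lra.
    apply sumR_ext. intros k Hk. replace (Nat.eqb k m) with false. lra.
    symmetry; apply Nat.eqb_neq; lia.
  - rewrite IHm by lia. replace (Nat.eqb m j) with false. unfold b2R; lra.
    symmetry; apply Nat.eqb_neq; lia.
Qed.

Lemma sumR_single_le m j f : (forall k, (k < m)%nat -> 0 <= f k) -> (j < m)%nat ->
  f j <= sumR m f.
Proof.
  induction m; intros H Hj. lia.
  rewrite sumR_S. destruct (Nat.eq_dec j m).
  - subst. assert (0 <= sumR m f) by (apply sumR_nonneg; intros; apply H; lia). lra.
  - assert (f j <= sumR m f) by (apply IHm; [intros; apply H; lia | lia]).
    specialize (H m ltac:(lia)). lra.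
Qed.

Lemma sumR_count m (p : nat -> bool) :
  sumR m (fun k => b2R (p k)) = INR (length (filter p (seq 0 m))).
Proof.
  induction m. reflexivity.
  rewrite sumR_S, IHm, seq_S, filter_app, length_app. simpl.
  destruct (p m); simpl; rewrite ?plus_INR; simpl; unfold b2R; lra.
Qed.

Definition mfun (r : R) : R := if Rle_dec r 1 then r else sqrt (2 / r).
Definition Bf (r : R) : R := if Rle_dec r 1 then 12 - 2 * r else 4 * sqrt (2 / r).

Lemma sqrt2_bounds : 4/3 <= sqrt 2 <= 3/2.
Proof.
  split.
  - rewrite <- (sqrt_square (4/3)) by lra. apply sqrt_le_1_alt. lra.
  - rewrite <- (sqrt_square (3/2)) by lra. apply sqrt_le_1_alt. lra.
Qed.

Lemma mfun_nonneg r : 0 <= r -> 0 <= mfun r.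
Proof. intros; unfold mfun; destruct Rle_dec; [lra| apply sqrt_pos]. Qed.

Lemma Bf_le r : 0 < r -> Bf r <= 12.
Proof.
  intros; unfold Bf; destruct Rle_dec. lra.
  assert (sqrt (2 / r) <= sqrt 2). { apply sqrt_le_1_alt.
    apply Rmult_le_reg_r with r. lra. unfold Rdiv. rewrite Rmult_assoc, Rinv_l by lra. nra. }
  pose proof sqrt2_bounds. lra.
Qed.

Lemma Bf_nonneg r : 0 < r -> 0 <= Bf r.
Proof.
  intros; unfold Bf; destruct Rle_dec. lra. pose proof (sqrt_pos (2/r)); lra.
Qed.

Lemma Bf_step r : 0 < r -> mfun r + Bf (2 * r) <= Bf r.
Proof.
  intros Hr. pose proof sqrt2_bounds as [S1 S2].
  unfold mfun, Bf. destruct (Rle_dec r 1); destruct (Rle_dec (2*r) 1).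
  - lra.
  - assert (sqrt (2/(2*r)) <= sqrt 2). { apply sqrt_le_1_alt.
      apply Rmult_le_reg_r with (2*r). lra. unfold Rdiv. rewrite Rmult_assoc, Rinv_l by lra. nra. }
    lra.
  - lra.
  - assert (E: sqrt (2/r) = sqrt 2 * sqrt (2/(2*r))).
    { rewrite <- sqrt_mult by (try lra; apply Rlt_le; apply Rdiv_lt_0_compat; lra).
      f_equal. field. lra. }
    rewrite E. pose proof (sqrt_pos (2/(2*r))). nra.
Qed.

Lemma geom_sum K : forall rho, 0 < rho ->
  sumR K (fun k => mfun (2 ^ k * rho)) <= Bf rho.
Proof.
  induction K; intros rho Hr.
  - rewrite sumR_0. apply Bf_nonneg; auto.
  - rewrite sumR_shift. simpl pow. rewrite Rmult_1_l.
    replace (sumR K (fun k => mfun (2 * 2 ^ k * rho)))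
      with (sumR K (fun k => mfun (2 ^ k * (2 * rho)))).
    + pose proof (IHK (2 * rho) ltac:(lra)). pose proof (Bf_step rho Hr). lra.
    + apply sumR_ext; intros; f_equal; ring.
Qed.

Lemma geom_sum12 K rho : 0 < rho -> sumR K (fun k => mfun (2 ^ k * rho)) <= 12.
Proof. intros; eapply Rle_trans. apply geom_sum; auto. apply Bf_le; auto. Qed.

Lemma ln_le_sub1 x : 0 < x -> ln x <= x - 1.
Proof. intros. pose proof (exp_ineq1_le (ln x)). rewrite exp_ln in H0; lra. Qed.

Lemma ln_le' x y : 0 < x -> x <= y -> ln x <= ln y.
Proof. intros. destruct (Req_dec x y). subst; lra. left; apply ln_increasing; lra. Qed.

Lemma alog_pos_form n a : (1 <= a)%nat -> (a <= n)%nat ->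
  alog n a = INR a * (1 + ln (INR n / INR a)).
Proof.
  intros Ha Hn. unfold alog. replace (Nat.eqb a 0) with false by (symmetry; apply Nat.eqb_neq; lia).
  assert (1 <= INR a) by (replace 1 with (INR 1) by reflexivity; apply le_INR; lia).
  assert (INR a <= INR n) by (apply le_INR; lia).
  f_equal. replace (exp 1 * INR n / INR a) with (exp 1 * (INR n / INR a)) by (unfold Rdiv; ring).
  rewrite ln_mult, ln_exp. reflexivity. apply exp_pos. apply Rdiv_lt_0_compat; lra.
Qed.

Lemma alog_nonneg n a : (a <= n)%nat -> 0 <= alog n a.
Proof.
  intros Hn. destruct a. unfold alog; simpl; lra.
  rewrite alog_pos_form by lia.
  assert (1 <= INR (S a)) by (replace 1 with (INR 1) by reflexivity; apply le_INR; lia).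
  assert (INR (S a) <= INR n) by (apply le_INR; lia).
  assert (0 <= ln (INR n / INR (S a))).
  { rewrite <- ln_1. apply ln_le'. lra. apply Rmult_le_reg_r with (INR (S a)). lra.
    unfold Rdiv. rewrite Rmult_assoc, Rinv_l by lra. lra. }
  nra.
Qed.

Lemma alog_F1 n a : (a <= n)%nat -> alog n a <= INR n.
Proof.
  intros Hn. destruct a. unfold alog; simpl. apply pos_INR.
  rewrite alog_pos_form by lia.
  assert (1 <= INR (S a)) by (replace 1 with (INR 1) by reflexivity; apply le_INR; lia).
  assert (INR (S a) <= INR n) by (apply le_INR; lia).
  pose proof (ln_le_sub1 (INR n / INR (S a)) ltac:(apply Rdiv_lt_0_compat; lra)).
  assert (INR (S a) * (INR n / INR (S a)) = INR n) by (field; lra).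
  apply Rle_trans with (INR (S a) * (INR n / INR (S a))); [apply Rmult_le_compat_l; lra | lra].
Qed.

Lemma alog_F2 n a : (1 <= a)%nat -> (a <= n)%nat ->
  alog n a / INR n <= 2 * sqrt (INR a / INR n).
Proof.
  intros Ha Hn. rewrite alog_pos_form by lia.
  assert (1 <= INR a) by (replace 1 with (INR 1) by reflexivity; apply le_INR; lia).
  assert (INR a <= INR n) by (apply le_INR; lia).
  set (A := INR a) in *. set (N := INR n) in *.
  set (s := sqrt (N / A)).
  assert (Hs : s * s = N / A) by (apply sqrt_sqrt; apply Rlt_le, Rdiv_lt_0_compat; lra).
  assert (Hs0 : 0 < s) by (apply sqrt_lt_R0; apply Rdiv_lt_0_compat; lra).
  assert (Hln : ln (N / A) <= 2 * (s - 1)).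
  { rewrite <- Hs, ln_mult by lra. pose proof (ln_le_sub1 s Hs0). lra. }
  assert (E : sqrt (A / N) = A / N * s).
  { apply sqrt_lem_1. apply Rlt_le, Rdiv_lt_0_compat; lra.
    apply Rmult_le_pos; [apply Rlt_le, Rdiv_lt_0_compat|]; lra.
    replace (A / N * s * (A / N * s)) with ((A/N)*(A/N)*(s*s)) by ring.
    rewrite Hs. field. lra. }
  rewrite E. assert (A * (1 + ln (N / A)) <= A * (2 * s)) by (apply Rmult_le_compat_l; lra).
  replace (2 * (A / N * s)) with (A * (2 * s) / N) by (field; lra).
  unfold Rdiv. apply Rmult_le_compat_r. apply Rlt_le, Rinv_0_lt_compat; lra. lra.
Qed.

Lemma level_bound n a w y : (a <= n)%nat -> 0 < w -> 0 < y -> w ^ 2 * INR a <= y ->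
  sqrt (alog n a * (w ^ 2 * INR a) / INR n) <= sqrt y * mfun (w * sqrt (INR n / y)).
Proof.
  intros Hn Hw Hy Hwy.
  destruct a as [|a].
  { unfold alog; simpl. replace (0 * _ / _) with 0 by (unfold Rdiv; ring). rewrite sqrt_0.
    apply Rmult_le_pos. apply sqrt_pos. apply mfun_nonneg.
    apply Rmult_le_pos. lra. apply sqrt_pos. }
  assert (1 <= INR (S a)) by (replace 1 with (INR 1) by reflexivity; apply le_INR; lia).
  assert (INR (S a) <= INR n) by (apply le_INR; lia).
  set (A := INR (S a)) in *. set (N := INR n) in *.
  pose proof (alog_F1 n (S a) Hn) as F1. pose proof (alog_F2 n (S a) ltac:(lia) Hn) as F2.
  pose proof (alog_nonneg n (S a) Hn) as F0. fold A N in F1, F2.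
  set (al := alog n (S a)) in *.
  assert (HN : 0 < N) by lra.
  set (r := w * sqrt (N / y)).
  assert (Hsq : sqrt (N / y) * sqrt (N / y) = N / y) by (apply sqrt_sqrt; apply Rlt_le, Rdiv_lt_0_compat; lra).
  assert (Hsq0 : 0 < sqrt (N / y)) by (apply sqrt_lt_R0; apply Rdiv_lt_0_compat; lra).
  assert (Hr : 0 < r) by (unfold r; nra).
  assert (Hal : al / N <= 1) by (apply Rmult_le_reg_r with N; [lra|]; unfold Rdiv; rewrite Rmult_assoc, Rinv_l; lra).
  assert (Hal0 : 0 <= al / N) by (apply Rmult_le_pos; [lra| apply Rlt_le, Rinv_0_lt_compat; lra]).
  replace (al * (w ^ 2 * A) / N) with (al / N * (w ^ 2 * A)) by (unfold Rdiv; ring).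
  unfold mfun. fold r. destruct (Rle_dec r 1).
  -
    assert (E : sqrt y * r = sqrt (w^2 * N)).
    { unfold r. rewrite sqrt_mult, <- (sqrt_square w) at 1 by nra.
      rewrite (sqrt_div_alt N y) by lra.
      assert (sqrt y > 0) by (apply sqrt_lt_R0; lra).
      replace (sqrt (w*w)) with (sqrt (w^2)) by (f_equal; ring). field. lra. }
    rewrite E. apply sqrt_le_1_alt.
    assert (w^2 * A <= w^2 * N) by (apply Rmult_le_compat_l; nra).
    assert (0 <= w^2*A) by nra. nra.
  -
    rewrite <- sqrt_mult by (try lra; apply Rlt_le, Rdiv_lt_0_compat; lra).
    apply sqrt_le_1_alt.
    assert (Hq : sqrt (A / N) <= / r).
    { rewrite <- (sqrt_square (/ r)) by (apply Rlt_le, Rinv_0_lt_compat; lra).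
      apply sqrt_le_1_alt.
      assert (r * r = w^2 * (N / y)) by (unfold r; transitivity (w^2 * (sqrt (N/y) * sqrt (N/y))); [ring | rewrite Hsq; reflexivity]).
      apply Rmult_le_reg_r with (r*r). nra.
      replace (/ r * / r * (r * r)) with 1 by (field; lra).
      rewrite H1. unfold Rdiv.
      replace (A * / N * (w ^ 2 * (N * / y))) with (w^2 * A / y) by (field; lra).
      apply Rmult_le_reg_r with y. lra. unfold Rdiv. rewrite Rmult_assoc, Rinv_l; lra. }
    assert (0 <= w^2 * A) by nra.
    apply Rle_trans with (2 * sqrt (A/N) * (w^2 * A)). apply Rmult_le_compat_r; lra.
    apply Rle_trans with (2 * / r * y).
    { apply Rmult_le_compat. pose proof (sqrt_pos (A/N)); lra. lra. lra. lra. }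
    unfold Rdiv. lra.
Qed.

Lemma wt_pos n h k : (0 < n)%nat -> (0 < h)%nat -> 0 < wt n h k.
Proof.
  intros. unfold wt. apply Rdiv_lt_0_compat. apply pow_lt; lra.
  apply sqrt_lt_R0. apply Rmult_lt_0_compat; apply lt_0_INR; lia.
Qed.

Lemma sumR_zero m : sumR m (fun _ => 0) = 0.
Proof. induction m. reflexivity. rewrite sumR_S, IHm. lra. Qed.

Lemma per_i n h K (a : nat -> nat) : (0 < h)%nat -> (forall k, (k < K)%nat -> (a k <= n)%nat) ->
  sumR K (fun k => sqrt (alog n (a k) * (wt n h k ^ 2 * INR (a k)) / INR n))
  <= 12 * sqrt (sumR K (fun k => wt n h k ^ 2 * INR (a k))).
Proof.
  intros Hh Ha.
  set (y := sumR K (fun k => wt n h k ^ 2 * INR (a k))).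
  assert (Hy0 : 0 <= y) by (apply sumR_nonneg; intros; apply Rmult_le_pos; [apply pow2_ge_0| apply pos_INR]).
  destruct (Nat.eq_dec n 0) as [Hn0|Hn0].
  { replace (sumR K _) with (sumR K (fun _ => 0)).
    - rewrite sumR_zero. pose proof (sqrt_pos y); lra.
    - apply sumR_ext. intros k Hk. specialize (Ha k Hk). replace (a k) with 0%nat by lia.
      unfold alog; simpl. replace (0 * _ / _) with 0 by (unfold Rdiv; ring). rewrite sqrt_0; auto. }
  destruct (Req_dec y 0) as [Hy|Hy].
  { replace (sumR K _) with (sumR K (fun _ => 0)).
    - rewrite sumR_zero. pose proof (sqrt_pos y); lra.
    - apply sumR_ext. intros k Hk.
      assert (wt n h k ^ 2 * INR (a k) <= y).
      { apply (sumR_single_le K k (fun k => wt n h k ^ 2 * INR (a k))); auto.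
        intros; apply Rmult_le_pos; [apply pow2_ge_0| apply pos_INR]. }
      assert (0 <= wt n h k ^ 2 * INR (a k)) by (apply Rmult_le_pos; [apply pow2_ge_0| apply pos_INR]).
      replace (wt n h k ^ 2 * INR (a k)) with 0 by lra.
      replace (_ * 0 / _) with 0 by (unfold Rdiv; ring). rewrite sqrt_0; auto. }
  assert (Hyp : 0 < y) by lra.
  set (rho := sqrt (INR n / y) / sqrt (INR n * INR h)).
  assert (Hrho : 0 < rho).
  { unfold rho. apply Rdiv_lt_0_compat; apply sqrt_lt_R0.
    apply Rdiv_lt_0_compat; [apply lt_0_INR; lia | lra].
    apply Rmult_lt_0_compat; apply lt_0_INR; lia. }
  apply Rle_trans with (sumR K (fun k => sqrt y * mfun (2 ^ k * rho))).
  - apply sumR_le. intros k Hk.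
    replace (2 ^ k * rho) with (wt n h k * sqrt (INR n / y)) by (unfold rho, wt; unfold Rdiv; ring).
    apply level_bound; auto. apply wt_pos; lia.
    apply (sumR_single_le K k (fun k => wt n h k ^ 2 * INR (a k))); auto.
    intros; apply Rmult_le_pos; [apply pow2_ge_0| apply pos_INR].
  - rewrite sumR_scal. rewrite Rmult_comm. apply Rmult_le_compat_r. apply sqrt_pos.
    apply geom_sum12; auto.
Qed.

Definition yf n h K (a : nat -> nat -> nat) i := sumR K (fun k => wt n h k ^ 2 * INR (a i k)).
Definition Yf n h K (adj : nat -> nat -> bool) (a : nat -> nat -> nat) (i : nat) :=
  sumR h (fun i' => b2R (adj i i') * yf n h K a i').
Definition tf n h (a : nat -> nat -> nat) i k :=
  sqrt (alog n (a i k) * (wt n h k ^ 2 * INR (a i k)) / INR n).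
Definition Dv n h K adj a L i k := sqrt (3/2 * L) * sqrt (Yf n h K adj a i) * tf n h a i k.

Lemma b2R_nonneg b : 0 <= b2R b.
Proof. destruct b; simpl; lra. Qed.

Lemma yf_nonneg n h K a i : 0 <= yf n h K a i.
Proof. apply sumR_nonneg; intros; apply Rmult_le_pos; [apply pow2_ge_0| apply pos_INR]. Qed.

Lemma Yf_nonneg n h K adj a i : 0 <= Yf n h K adj a i.
Proof. apply sumR_nonneg; intros; apply Rmult_le_pos; [apply b2R_nonneg| apply yf_nonneg]. Qed.

Lemma sumY n h K d adj a : simple_graph adj -> regular h d adj ->
  sumR h (fun i => Yf n h K adj a i) = INR d * sumR h (fun i => yf n h K a i).
Proof.
  intros [Hs _] Hr. unfold Yf. rewrite sumR_swap. rewrite <- sumR_scal.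
  apply sumR_ext. intros i' Hi'. rewrite sumR_scal_r.
  f_equal. rewrite <- (Hr i' Hi'). rewrite <- sumR_count.
  apply sumR_ext; intros; rewrite Hs; reflexivity.
Qed.

Lemma final_bound n h K d adj a L :
  (2 <= d)%nat -> simple_graph adj -> regular h d adj -> 20 <= L ->
  (forall i, (i < h)%nat -> sumR K (fun k => INR (a i k)) <= INR n) ->
  sumR h (fun i => yf n h K a i) <= 10 ->
  sumR h (fun i => sumR K (fun k => Dv n h K adj a L i k)) <= 55 * L * sqrt (INR d).
Proof.
  intros Hd Hsg Hr HL Hsum Hy.
  set (s := sqrt (INR d)).
  assert (Hs : 0 < s) by (apply sqrt_lt_R0; apply lt_0_INR; lia).
  assert (Hss : s * s = INR d) by (apply sqrt_sqrt, pos_INR).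
  set (c := sqrt (3/2 * L)).
  assert (Hc : 0 <= c) by apply sqrt_pos.
  apply Rle_trans with (sumR h (fun i => c * 12 * ((Yf n h K adj a i / s + s * yf n h K a i) / 2))).
  - apply sumR_le. intros i Hi. unfold Dv. fold c.
    replace (sumR K (fun k => c * sqrt (Yf n h K adj a i) * tf n h a i k))
      with (c * sqrt (Yf n h K adj a i) * sumR K (fun k => tf n h a i k))
      by (rewrite <- sumR_scal; reflexivity).
    assert (Ht : sumR K (fun k => tf n h a i k) <= 12 * sqrt (yf n h K a i)).
    { apply per_i. lia. intros k Hk. apply INR_le.
      eapply Rle_trans; [|apply (Hsum i Hi)].
      apply (sumR_single_le K k (fun k => INR (a i k))); auto. intros; apply pos_INR. }
    pose proof (sqrt_pos (Yf n h K adj a i)) as HY.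
    apply Rle_trans with (c * sqrt (Yf n h K adj a i) * (12 * sqrt (yf n h K a i))).
    { apply Rmult_le_compat_l. nra. auto. }
    assert (AM : sqrt (Yf n h K adj a i) * sqrt (yf n h K a i) <=
                 (Yf n h K adj a i / s + s * yf n h K a i) / 2).
    { pose proof (sqrt_sqrt _ (Yf_nonneg n h K adj a i)) as E1.
      pose proof (sqrt_sqrt _ (yf_nonneg n h K a i)) as E2.
      set (u := sqrt (Yf n h K adj a i)) in *. set (v := sqrt (yf n h K a i)) in *.
      rewrite <- E1, <- E2.
      assert (0 <= (u - s * v) * (u - s * v) / s) by (apply Rmult_le_pos; [pose proof (Rle_0_sqr (u - s * v)); unfold Rsqr in *; lra| apply Rlt_le, Rinv_0_lt_compat; lra]).
      replace ((u * u / s + s * (v * v)) / 2) with (u * v + (u - s * v) * (u - s * v) / s / 2) by (field; lra).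
      lra. }
    replace (c * sqrt (Yf n h K adj a i) * (12 * sqrt (yf n h K a i)))
      with (c * 12 * (sqrt (Yf n h K adj a i) * sqrt (yf n h K a i))) by ring.
    apply Rmult_le_compat_l. lra. auto.
  - rewrite sumR_scal.
    replace (sumR h (fun i => (Yf n h K adj a i / s + s * yf n h K a i) / 2))
      with ((sumR h (fun i => Yf n h K adj a i) / s + s * sumR h (fun i => yf n h K a i)) / 2).
    2:{ rewrite (sumR_ext h (fun i => (Yf n h K adj a i / s + s * yf n h K a i) / 2) (fun i => Yf n h K adj a i * (/ s * / 2) + yf n h K a i * (s * / 2)))
          by (intros; field; lra).
        rewrite sumR_plus, !sumR_scal_r. change (fun i => Yf n h K adj a i) with (Yf n h K adj a). change (fun i => yf n h K a i) with (yf n h K a). field. lra. }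
    rewrite (sumY n h K d adj a Hsg Hr). rewrite <- Hss.
    set (Y := sumR h (fun i => yf n h K a i)) in *.
    replace ((s * s * Y / s + s * Y) / 2) with (s * Y) by (field; lra).
    assert (Hc2 : c <= 55 * L / 120).
    { unfold c. rewrite <- (sqrt_square (55 * L / 120)) by lra. apply sqrt_le_1_alt. nra. }
    assert (0 <= Y) by (apply sumR_nonneg; intros; apply yf_nonneg).
    apply Rle_trans with (55 * L / 120 * 12 * (s * 10)).
    apply Rmult_le_compat. nra. nra. nra. nra.
    lra.
Qed.

Definition DS h K (f : nat -> nat -> R) := sumR h (fun i => sumR K (fun k => f i k)).

Lemma DS_ext h K f g : (forall i k, (i < h)%nat -> (k < K)%nat -> f i k = g i k) -> DS h K f = DS h K g.
Proof. intros; apply sumR_ext; intros; apply sumR_ext; intros; auto. Qed.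
Lemma DS_le h K f g : (forall i k, (i < h)%nat -> (k < K)%nat -> f i k <= g i k) -> DS h K f <= DS h K g.
Proof. intros; apply sumR_le; intros; apply sumR_le; intros; auto. Qed.
Lemma DS_nonneg h K f : (forall i k, (i < h)%nat -> (k < K)%nat -> 0 <= f i k) -> 0 <= DS h K f.
Proof. intros; apply sumR_nonneg; intros; apply sumR_nonneg; intros; auto. Qed.
Lemma DS_plus h K f g : DS h K (fun i k => f i k + g i k) = DS h K f + DS h K g.
Proof. unfold DS. rewrite <- sumR_plus. apply sumR_ext; intros. apply sumR_plus. Qed.
Lemma DS_minus h K f g : DS h K (fun i k => f i k - g i k) = DS h K f - DS h K g.
Proof. unfold DS. rewrite <- sumR_minus. apply sumR_ext; intros. apply sumR_minus. Qed.
Lemma DS_scal h K c f : DS h K (fun i k => c * f i k) = c * DS h K f.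
Proof. unfold DS. rewrite <- sumR_scal. apply sumR_ext; intros. apply sumR_scal. Qed.
Lemma DS_abs h K f : Rabs (DS h K f) <= DS h K (fun i k => Rabs (f i k)).
Proof.
  unfold DS. eapply Rle_trans. apply sumR_abs. apply sumR_le; intros. apply sumR_abs.
Qed.
Lemma DS_single_le h K f i k : (forall i k, (i < h)%nat -> (k < K)%nat -> 0 <= f i k) ->
  (i < h)%nat -> (k < K)%nat -> f i k <= DS h K f.
Proof.
  intros H Hi Hk. unfold DS.
  eapply Rle_trans; [| apply (sumR_single_le h i (fun i => sumR K (fun k => f i k)))].
  apply (sumR_single_le K k (fun k => f i k)); auto.
  intros; apply sumR_nonneg; auto. auto.
Qed.

Definition dlt iv kv i k := b2R (Nat.eqb i iv) * b2R (Nat.eqb k kv).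

Lemma DS_pick h K iv kv F : (iv < h)%nat -> (kv < K)%nat ->
  DS h K (fun i k => dlt iv kv i k * F i k) = F iv kv.
Proof.
  intros Hi Hk. unfold DS, dlt.
  rewrite (sumR_ext h _ (fun i => b2R (Nat.eqb i iv) * F i kv)).
  apply (sumR_pick h iv (fun i => F i kv)); auto.
  intros i _. rewrite <- (sumR_pick K kv (F i)) by auto. rewrite <- sumR_scal.
  apply sumR_ext; intros. apply Rmult_assoc.
Qed.

Lemma sumR_const m c : sumR m (fun _ => c) = INR m * c.
Proof. induction m. rewrite sumR_0. replace (INR 0) with 0 by reflexivity. ring. rewrite sumR_S, IHm, S_INR. ring. Qed.

Lemma indR_1 (P : Prop) : P -> indR P = 1.
Proof. intros; unfold indR; destruct excluded_middle_informative; tauto. Qed.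
Lemma indR_0 (P : Prop) : ~ P -> indR P = 0.
Proof. intros; unfold indR; destruct excluded_middle_informative; tauto. Qed.
Lemma indR_nonneg P : 0 <= indR P.
Proof. unfold indR; destruct excluded_middle_informative; lra. Qed.
Lemma indR_iff (P Q : Prop) : (P <-> Q) -> indR P = indR Q.
Proof.
  intros H. destruct (classic P). rewrite !indR_1; tauto. rewrite !indR_0; tauto.
Qed.
Lemma indR_and_b P b : indR (P /\ b = true) = indR P * b2R b.
Proof.
  destruct b; simpl.
  - rewrite Rmult_1_r. apply indR_iff. tauto.
  - rewrite Rmult_0_r. apply indR_0. intros [_ H]; discriminate.
Qed.
Lemma b2R_le1 b : b2R b <= 1.
Proof. destruct b; simpl; lra. Qed.

Lemma inv_INR_nonneg n : 0 <= / INR n.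
Proof.
  destruct n. simpl. rewrite Rinv_0. lra.
  apply Rlt_le, Rinv_0_lt_compat, lt_0_INR; lia.
Qed.

Definition Tm h d adj n a e i k i' k' :=
  indR (SDE h d adj n a e i k i' k') *
  (wt n h k * wt n h k' * INR (a i k) * INR (a i' k') / INR n * eps n a e i k i' k').

Definition GS h d adj n K a e (S : nat -> nat -> bool) :=
  DS h K (fun i k => DS h K (fun i' k' => b2R (S i k) * b2R (S i' k') * Tm h d adj n a e i k i' k')).

Lemma sub_pointwise h d adj n a e S i k i' k' :
  indR (SDE h d adj n (subA S a) (subE S e) i k i' k') *
  (wt n h k * wt n h k' * INR (subA S a i k) * INR (subA S a i' k') / INR n *
   eps n (subA S a) (subE S e) i k i' k')
  = b2R (S i k) * b2R (S i' k') * Tm h d adj n a e i k i' k'.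
Proof.
  unfold Tm. destruct (S i k) eqn:H1.
  - destruct (S i' k') eqn:H2.
    + assert (He : eps n (subA S a) (subE S e) i k i' k' = eps n a e i k i' k')
        by (unfold eps, subA, subE; rewrite H1, H2; reflexivity).
      assert (Hs : indR (SDE h d adj n (subA S a) (subE S e) i k i' k') = indR (SDE h d adj n a e i k i' k'))
        by (apply indR_iff; unfold SDE; rewrite He; tauto).
      rewrite He, Hs. unfold subA; rewrite H1, H2. cbn [b2R]; unfold Rdiv; ring.
    + replace (INR (subA S a i' k')) with 0 by (unfold subA; rewrite H2; reflexivity). cbn [b2R]; unfold Rdiv; ring.
  - replace (INR (subA S a i k)) with 0 by (unfold subA; rewrite H1; reflexivity). cbn [b2R]; unfold Rdiv; ring.
Qed.

Lemma pSD_sub h d adj n K a e S :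
  pSD h d adj n K (subA S a) (subE S e) = Rabs (/ 2 * GS h d adj n K a e S).
Proof.
  unfold pSD, GS, DS. f_equal. f_equal.
  apply sumR_ext; intros; apply sumR_ext; intros; apply sumR_ext; intros; apply sumR_ext; intros.
  apply sub_pointwise.
Qed.

Definition box h K := fun i k => (Nat.ltb i h && Nat.ltb k K)%bool.

Lemma b2R_box h K i k : (i < h)%nat -> (k < K)%nat -> b2R (box h K i k) = 1.
Proof.
  intros. unfold box. apply Nat.ltb_lt in H. apply Nat.ltb_lt in H0. rewrite H, H0. reflexivity.
Qed.

Lemma pSD_full h d adj n K a e :
  pSD h d adj n K a e = Rabs (/ 2 * GS h d adj n K a e (box h K)).
Proof.
  unfold pSD, GS, DS. f_equal. f_equal.
  apply sumR_ext; intros; apply sumR_ext; intros; apply sumR_ext; intros; apply sumR_ext; intros.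
  rewrite !b2R_box by auto. unfold Tm. unfold Rdiv; ring.
Qed.

Lemma GammaE_sym h d adj i k i' k' : (2 <= d)%nat -> simple_graph adj ->
  GammaE h d adj i k i' k' -> GammaE h d adj i' k' i k.
Proof.
  intros Hd [Hs _] (Hi & Hi' & Ha & H1 & H2).
  assert (Hsd : 0 < sqrt (INR d)) by (apply sqrt_lt_R0, lt_0_INR; lia).
  assert (P1 : 0 < 2 ^ k) by (apply pow_lt; lra).
  assert (P2 : 0 < 2 ^ k') by (apply pow_lt; lra).
  set (x := 2 ^ k / 2 ^ k') in *.
  assert (Hx : 0 < x) by (unfold x; apply Rdiv_lt_0_compat; auto).
  assert (E : 2 ^ k' / 2 ^ k = / x) by (unfold x; field; lra).
  repeat split; auto. rewrite Hs; auto.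
  - rewrite E. apply Rinv_lt_contravar. nra. auto.
  - rewrite E. rewrite <- (Rinv_inv (sqrt (INR d))). apply Rinv_lt_contravar.
    apply Rmult_lt_0_compat; auto. apply Rinv_0_lt_compat; auto. auto.
Qed.

Lemma Tm_sym h d adj n a e i k i' k' : (2 <= d)%nat -> simple_graph adj ->
  (forall i k i' k', GammaE h d adj i k i' k' -> e i k i' k' = e i' k' i k) ->
  Tm h d adj n a e i k i' k' = Tm h d adj n a e i' k' i k.
Proof.
  intros Hd Hsg He. unfold Tm.
  destruct (classic (GammaE h d adj i k i' k')) as [G|G].
  - assert (G' := GammaE_sym _ _ _ _ _ _ _ Hd Hsg G).
    assert (Ee : eps n a e i k i' k' = eps n a e i' k' i k).
    { unfold eps. rewrite (He _ _ _ _ G). rewrite Bool.orb_comm.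
      destruct (_ || _)%bool; [reflexivity|]. f_equal. f_equal. unfold Rdiv; ring. }
    assert (Es : indR (SDE h d adj n a e i k i' k') = indR (SDE h d adj n a e i' k' i k)).
    { apply indR_iff. unfold SDE. rewrite Ee. tauto. }
    rewrite Ee, Es. unfold Rdiv; ring.
  - rewrite !indR_0. unfold Rdiv; ring.
    intros [G' _]. apply G. apply GammaE_sym; auto.
    intros [G' _]. apply G; auto.
Qed.

Lemma Tm_diag h d adj n a e i k : simple_graph adj -> Tm h d adj n a e i k i k = 0.
Proof.
  intros [_ Hd]. unfold Tm. rewrite indR_0. unfold Rdiv; ring.
  intros [(_ & _ & Ha & _) _]. rewrite Hd in Ha. discriminate.
Qed.

Definition rem (S : nat -> nat -> bool) iv kv :=
  fun i k => (S i k && negb (Nat.eqb i iv && Nat.eqb k kv))%bool.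

Lemma b2R_rem S iv kv i k : S iv kv = true ->
  b2R (rem S iv kv i k) = b2R (S i k) - dlt iv kv i k.
Proof.
  intros H. unfold rem, dlt.
  destruct (Nat.eqb_spec i iv), (Nat.eqb_spec k kv); subst; cbn [andb negb b2R].
  - rewrite H. cbn. lra.
  - destruct (S iv k); cbn; lra.
  - destruct (S i kv); cbn; lra.
  - destruct (S i k); cbn; lra.
Qed.

Lemma GS_remove h d adj n K a e S iv kv :
  (2 <= d)%nat -> simple_graph adj ->
  (forall i k i' k', GammaE h d adj i k i' k' -> e i k i' k' = e i' k' i k) ->
  (iv < h)%nat -> (kv < K)%nat -> S iv kv = true ->
  GS h d adj n K a e S - GS h d adj n K a e (rem S iv kv)
  = 2 * DS h K (fun i' k' => b2R (S i' k') * Tm h d adj n a e iv kv i' k').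
Proof.
  intros Hd Hsg He Hi Hk HS. unfold GS. rewrite <- DS_minus.
  set (T := Tm h d adj n a e).
  set (F1 := fun x1 x2 => DS h K (fun y1 y2 => b2R (S y1 y2) * T x1 x2 y1 y2)).
  rewrite (DS_ext h K _ (fun x1 x2 => dlt iv kv x1 x2 * F1 x1 x2 + b2R (S x1 x2) * T x1 x2 iv kv
                                      - dlt iv kv x1 x2 * T x1 x2 iv kv)).
  - rewrite DS_minus, DS_plus.
    rewrite (DS_pick h K iv kv F1) by auto.
    rewrite (DS_pick h K iv kv (fun x1 x2 => T x1 x2 iv kv)) by auto.
    cbv beta. replace (T iv kv iv kv) with 0 by (unfold T; rewrite Tm_diag; auto).
    rewrite (DS_ext h K (fun x1 x2 => b2R (S x1 x2) * T x1 x2 iv kv) (fun x1 x2 => b2R (S x1 x2) * T iv kv x1 x2)).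
    + unfold F1. ring.
    + intros. unfold T. rewrite Tm_sym; auto.
  - intros x1 x2 Hx1 Hx2. rewrite <- DS_minus.
    rewrite (DS_ext h K _ (fun y1 y2 => dlt iv kv x1 x2 * (b2R (S y1 y2) * T x1 x2 y1 y2)
               + b2R (S x1 x2) * (dlt iv kv y1 y2 * T x1 x2 y1 y2)
               - dlt iv kv x1 x2 * (dlt iv kv y1 y2 * T x1 x2 y1 y2))).
    + rewrite DS_minus, DS_plus.
      rewrite (DS_scal h K (dlt iv kv x1 x2) (fun y1 y2 => b2R (S y1 y2) * T x1 x2 y1 y2)).
      rewrite (DS_scal h K (b2R (S x1 x2)) (fun y1 y2 => dlt iv kv y1 y2 * T x1 x2 y1 y2)).
      rewrite (DS_scal h K (dlt iv kv x1 x2) (fun y1 y2 => dlt iv kv y1 y2 * T x1 x2 y1 y2)).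
      rewrite (DS_pick h K iv kv (T x1 x2)) by auto. unfold F1. ring.
    + intros y1 y2 _ _. rewrite !b2R_rem by auto. ring.
Qed.

Lemma amgm c A B : 0 <= A -> 0 <= B -> (forall t, 0 < t -> c <= t * A + B / t) -> c <= 2 * sqrt (A * B).
Proof.
  intros HA HB H.
  destruct (Req_dec A 0) as [A0|A0].
  - subst. rewrite Rmult_0_l, sqrt_0. destruct (Rle_dec c 0). lra.
    specialize (H ((2 * B + 1) / c) ltac:(apply Rdiv_lt_0_compat; lra)).
    exfalso. replace (B / ((2 * B + 1) / c)) with (B * c / (2 * B + 1)) in H by (field; lra).
    assert (B * c / (2 * B + 1) < c).
    { apply Rmult_lt_reg_r with (2 * B + 1). lra. unfold Rdiv. rewrite Rmult_assoc, Rinv_l by lra. nra. }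
    lra.
  - destruct (Req_dec B 0) as [B0|B0].
    + subst. rewrite Rmult_0_r, sqrt_0. destruct (Rle_dec c 0). lra.
      specialize (H (c / (2 * A + 1)) ltac:(apply Rdiv_lt_0_compat; lra)).
      exfalso. unfold Rdiv in H. rewrite Rmult_0_l in H.
      assert (c * / (2 * A + 1) * A < c).
      { apply Rmult_lt_reg_r with (2 * A + 1). lra. 
        replace (c * / (2 * A + 1) * A * (2 * A + 1)) with (c * A) by (field; lra). nra. }
      lra.
    + assert (sA : 0 < sqrt A) by (apply sqrt_lt_R0; lra).
      assert (sB : 0 < sqrt B) by (apply sqrt_lt_R0; lra).
      specialize (H (sqrt B / sqrt A) ltac:(apply Rdiv_lt_0_compat; auto)).
      rewrite sqrt_mult by lra.
      pose proof (sqrt_sqrt A HA). pose proof (sqrt_sqrt B HB).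
      replace (sqrt B / sqrt A * A + B / (sqrt B / sqrt A)) with (2 * (sqrt A * sqrt B)) in H.
      lra. set (sa := sqrt A) in *. set (sb := sqrt B) in *.
      rewrite <- H0, <- H1. field. lra.
Qed.

Lemma wt_nonneg n h k : 0 <= wt n h k.
Proof.
  unfold wt. apply Rmult_le_pos. apply pow_le; lra.
  destruct (Req_dec (sqrt (INR n * INR h)) 0) as [E|E]. rewrite E, Rinv_0; lra.
  apply Rlt_le, Rinv_0_lt_compat. pose proof (sqrt_pos (INR n * INR h)); lra.
Qed.

Lemma pt_amgm p q t : 0 < t -> p * q <= t / 2 * p ^ 2 + q ^ 2 / (2 * t).
Proof.
  intros Ht. assert (0 <= (t * p - q) ^ 2 / (2 * t)).
  { apply Rmult_le_pos. apply pow2_ge_0. apply Rlt_le, Rinv_0_lt_compat; lra. }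
  replace (t / 2 * p ^ 2 + q ^ 2 / (2 * t)) with (p * q + (t * p - q) ^ 2 / (2 * t)) by (field; lra).
  lra.
Qed.

Lemma cost_pt h d adj n a e (s : bool) iv kv i' k' t : 0 < t ->
  b2R s * Rabs (Tm h d adj n a e iv kv i' k') <=
  t / 2 * 15 * (indR (SDE h d adj n a e iv kv i' k' /\ s = true) *
     (INR (a iv kv) * INR (a i' k') / INR n * (eps n a e iv kv i' k' ^ 2 / 15)))
  + (wt n h kv ^ 2 * INR (a iv kv) * / INR n / (2 * t)) * (b2R (adj iv i') * (wt n h k' ^ 2 * INR (a i' k'))).
Proof.
  intros Ht. unfold Tm. rewrite indR_and_b.
  set (I := indR (SDE h d adj n a e iv kv i' k')).
  set (ep := eps n a e iv kv i' k').
  set (wv := wt n h kv). set (wy := wt n h k').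
  set (av := INR (a iv kv)). set (ay := INR (a i' k')). set (ni := / INR n).
  assert (HI : 0 <= I) by apply indR_nonneg.
  assert (HIa : I <= b2R (adj iv i')).
  { unfold I. destruct (classic (SDE h d adj n a e iv kv i' k')) as [P|P].
    - rewrite indR_1 by auto. destruct P as [(_ & _ & Ha & _) _]. rewrite Ha. cbn; lra.
    - rewrite indR_0 by auto. apply b2R_nonneg. }
  assert (Hs0 : 0 <= b2R s) by apply b2R_nonneg.
  assert (Hs1 : b2R s <= 1) by apply b2R_le1.
  assert (Hwv : 0 <= wv) by apply wt_nonneg. assert (Hwy : 0 <= wy) by apply wt_nonneg.
  assert (Hav : 0 <= av) by apply pos_INR. assert (Hay : 0 <= ay) by apply pos_INR.
  assert (Hni : 0 <= ni) by apply inv_INR_nonneg.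
  assert (Eni : / INR n = ni) by reflexivity.
  clearbody I ep wv wy av ay ni.
  set (X := b2R s * I * (av * ay * ni)).
  assert (HX : 0 <= X) by (unfold X; repeat apply Rmult_le_pos; auto).
  assert (E1 : b2R s * Rabs (I * (wv * wy * av * ay / INR n * ep)) = X * (Rabs ep * (wv * wy))).
  { unfold Rdiv. rewrite Eni. rewrite Rabs_mult, (Rabs_right I) by lra.
    rewrite Rabs_mult, (Rabs_right (wv * wy * av * ay * ni)) by (apply Rle_ge; repeat apply Rmult_le_pos; auto).
    unfold X. ring. }
  rewrite E1.
  pose proof (pt_amgm (Rabs ep) (wv * wy) t Ht) as Hp.
  rewrite <- Rsqr_pow2, <- Rsqr_abs, Rsqr_pow2 in Hp.
  apply Rle_trans with (X * (t / 2 * ep ^ 2 + (wv * wy) ^ 2 / (2 * t))).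
  { apply Rmult_le_compat_l; auto. }
  assert (E2 : X * (t / 2 * ep ^ 2) = t / 2 * 15 * (I * b2R s * (av * ay / INR n * (ep ^ 2 / 15)))).
  { unfold X, Rdiv. rewrite Eni. field. }
  assert (E3 : X * ((wv * wy) ^ 2 / (2 * t)) <= wv ^ 2 * av * ni / (2 * t) * (b2R (adj iv i') * (wy ^ 2 * ay))).
  { unfold X.
    assert (b2R s * I <= b2R (adj iv i')) by nra.
    replace (b2R s * I * (av * ay * ni) * ((wv * wy) ^ 2 / (2 * t)))
      with ((b2R s * I) * (wv ^ 2 * av * ni / (2 * t) * (wy ^ 2 * ay))) by (field; lra).
    replace (wv ^ 2 * av * ni / (2 * t) * (b2R (adj iv i') * (wy ^ 2 * ay)))
      with (b2R (adj iv i') * (wv ^ 2 * av * ni / (2 * t) * (wy ^ 2 * ay))) by (field; lra).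
    apply Rmult_le_compat_r; auto.
    assert (0 <= wv ^ 2) by apply pow2_ge_0. assert (0 <= wy ^ 2) by apply pow2_ge_0.
    assert (0 <= / (2 * t)) by (apply Rlt_le, Rinv_0_lt_compat; lra).
    unfold Rdiv. repeat apply Rmult_le_pos; try assumption; try lra. }
  rewrite Rmult_plus_distr_l. lra.
Qed.

Lemma cost h d adj n K a e L S iv kv :
  (iv < h)%nat -> (kv < K)%nat -> (a iv kv <= n)%nat -> 0 <= L ->
  sumR h (fun i' => sumR K (fun k' =>
        indR (SDE h d adj n a e iv kv i' k' /\ S i' k' = true) *
        (INR (a iv kv) * INR (a i' k') / INR n * (eps n a e iv kv i' k' ^ 2 / 15))))
    < L / 10 * alog n (a iv kv) ->
  DS h K (fun i' k' => b2R (S i' k') * Rabs (Tm h d adj n a e iv kv i' k')) <= Dv n h K adj a L iv kv.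
Proof.
  intros Hi Hk Han HL Hf.
  set (g := fun i' k' => indR (SDE h d adj n a e iv kv i' k' /\ S i' k' = true) *
        (INR (a iv kv) * INR (a i' k') / INR n * (eps n a e iv kv i' k' ^ 2 / 15))).
  assert (Hg : DS h K g < L / 10 * alog n (a iv kv)) by exact Hf.
  set (al := alog n (a iv kv)).
  assert (Hal : 0 <= al) by (apply alog_nonneg; auto).
  set (wv := wt n h kv). set (av := INR (a iv kv)). set (ni := / INR n).
  set (Y := Yf n h K adj a iv).
  assert (HY : 0 <= Y) by apply Yf_nonneg.
  assert (Hwv : 0 <= wv ^ 2) by apply pow2_ge_0. assert (Hav : 0 <= av) by apply pos_INR.
  assert (Hni : 0 <= ni) by apply inv_INR_nonneg.
  set (A := 3 / 4 * L * al). set (B := wv ^ 2 * av * ni / 2 * Y).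
  assert (HA : 0 <= A) by (unfold A; apply Rmult_le_pos; lra).
  assert (HB : 0 <= B).
  { unfold B, Rdiv. apply Rmult_le_pos; [|exact HY]. apply Rmult_le_pos; [|apply Rlt_le, Rinv_0_lt_compat; lra].
    apply Rmult_le_pos; [|exact Hni]. apply Rmult_le_pos; assumption. }
  apply Rle_trans with (2 * sqrt (A * B)).
  - apply amgm; auto. intros t Ht.
    apply Rle_trans with (DS h K (fun i' k' => t / 2 * 15 * g i' k' +
         (wv ^ 2 * av * ni / (2 * t)) * (b2R (adj iv i') * (wt n h k' ^ 2 * INR (a i' k'))))).
    + apply DS_le. intros i' k' _ _. apply cost_pt; auto.
    + rewrite DS_plus.
      rewrite (DS_scal h K (t / 2 * 15) g).
      rewrite (DS_scal h K (wv ^ 2 * av * ni / (2 * t)) (fun i' k' => b2R (adj iv i') * (wt n h k' ^ 2 * INR (a i' k')))).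
      replace (DS h K (fun i' k' => b2R (adj iv i') * (wt n h k' ^ 2 * INR (a i' k')))) with Y.
      2:{ unfold Y, Yf, yf, DS. apply sumR_ext; intros. rewrite sumR_scal. reflexivity. }
      assert (t / 2 * 15 * DS h K g <= t * A).
      { apply Rle_trans with (t / 2 * 15 * (L / 10 * al)).
        apply Rmult_le_compat_l. lra. fold al in Hg. lra. unfold A; right; field. }
      replace (B / t) with (wv ^ 2 * av * ni / (2 * t) * Y) by (unfold B; field; lra).
      lra.
  - unfold Dv, tf. fold al wv av Y.
    replace 2 with (sqrt 4) at 1 by (rewrite <- (sqrt_square 2) by lra; f_equal; ring).
    assert (HT : 0 <= al * (wv ^ 2 * av) / INR n) by (unfold Rdiv; fold ni; apply Rmult_le_pos; [apply Rmult_le_pos; [exact Hal| apply Rmult_le_pos; assumption]| exact Hni]).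
    rewrite <- !sqrt_mult by (first [lra | assumption | apply Rmult_le_pos; first [lra|assumption]]).
    right. f_equal. unfold A, B, Rdiv. fold ni. field.
Qed.

Definition good h d adj n K a e L (S : nat -> nat -> bool) : Prop :=
  forall i k, (i < h)%nat -> S i k = true ->
      sumR h (fun i' => sumR K (fun k' =>
        indR (SDE h d adj n a e i k i' k' /\ S i' k' = true) *
        (INR (a i k) * INR (a i' k') / INR n * (eps n a e i k i' k' ^ 2 / 15))))
      >= L / 10 * alog n (a i k).

Definition cnt h K (S : nat -> nat -> bool) := DS h K (fun i k => b2R (S i k)).
Definition PS h K adj n a L (S : nat -> nat -> bool) :=
  DS h K (fun i k => b2R (S i k) * Dv n h K adj a L i k).
Definition inbox h K (S : nat -> nat -> bool) := forall i k, S i k = true -> (i < h)%nat /\ (k < K)%nat.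

Lemma Dv_nonneg n h K adj a L i k : 0 <= Dv n h K adj a L i k.
Proof. unfold Dv, tf. repeat apply Rmult_le_pos; apply sqrt_pos. Qed.

Lemma DS_rem h K S iv kv F : (iv < h)%nat -> (kv < K)%nat -> S iv kv = true ->
  DS h K (fun i k => b2R (rem S iv kv i k) * F i k) = DS h K (fun i k => b2R (S i k) * F i k) - F iv kv.
Proof.
  intros Hi Hk HS. rewrite <- (DS_pick h K iv kv F) by auto. rewrite <- DS_minus.
  apply DS_ext; intros. rewrite b2R_rem by auto. ring.
Qed.

Lemma greedy h d adj n K a e L :
  (2 <= d)%nat -> simple_graph adj ->
  (forall i k i' k', GammaE h d adj i k i' k' -> e i k i' k' = e i' k' i k) ->
  (forall i k, (i < h)%nat -> (k < K)%nat -> (a i k <= n)%nat) -> 0 <= L ->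
  forall m S, inbox h K S -> cnt h K S <= INR m ->
  exists S', good h d adj n K a e L S' /\
    Rabs (GS h d adj n K a e S - GS h d adj n K a e S') <= 2 * (PS h K adj n a L S - PS h K adj n a L S').
Proof.
  intros Hd Hsg He Han HL m. induction m as [|m IH]; intros S Hbox Hc.
  - destruct (classic (good h d adj n K a e L S)) as [G|G].
    + exists S. split; auto. rewrite !Rminus_diag, Rabs_R0. lra.
    + exfalso. apply not_all_ex_not in G as [i G]. apply not_all_ex_not in G as [k G].
      apply imply_to_and in G as [Hi G]. apply imply_to_and in G as [HS _].
      destruct (Hbox i k HS) as [_ Hk].
      assert (b2R (S i k) <= cnt h K S).
      { apply (DS_single_le h K (fun i k => b2R (S i k))); auto. intros; apply b2R_nonneg. }
      rewrite HS in H. cbn in H, Hc. lra.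
  - destruct (classic (good h d adj n K a e L S)) as [G|G].
    + exists S. split; auto. rewrite !Rminus_diag, Rabs_R0. lra.
    + apply not_all_ex_not in G as [i G]. apply not_all_ex_not in G as [k G].
      apply imply_to_and in G as [Hi G]. apply imply_to_and in G as [HS G].
      apply Rnot_ge_lt in G.
      destruct (Hbox i k HS) as [_ Hk].
      set (S1 := rem S i k).
      assert (Hb1 : inbox h K S1).
      { intros i' k' H. apply Hbox. unfold S1, rem in H. apply andb_prop in H. tauto. }
      assert (Hc1 : cnt h K S1 <= INR m).
      { unfold cnt. rewrite (DS_ext h K (fun i0 k1 => b2R (S1 i0 k1)) (fun i0 k1 => b2R (rem S i k i0 k1) * 1))
          by (intros; unfold S1; ring).
        rewrite DS_rem by auto.
        rewrite (DS_ext h K (fun i0 k1 => b2R (S i0 k1) * 1) (fun i0 k1 => b2R (S i0 k1))) by (intros; ring).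
        fold (cnt h K S). rewrite S_INR in Hc. lra. }
      destruct (IH S1 Hb1 Hc1) as [S' [G' HG']].
      exists S'. split; auto.
      assert (HP : PS h K adj n a L S1 = PS h K adj n a L S - Dv n h K adj a L i k).
      { unfold PS, S1. apply DS_rem; auto. }
      assert (HR : GS h d adj n K a e S - GS h d adj n K a e S1 =
                   2 * DS h K (fun i' k' => b2R (S i' k') * Tm h d adj n a e i k i' k'))
        by (apply GS_remove; auto).
      assert (HCo : DS h K (fun i' k' => b2R (S i' k') * Rabs (Tm h d adj n a e i k i' k'))
                    <= Dv n h K adj a L i k).
      { apply cost; auto. }
      assert (HA : Rabs (DS h K (fun i' k' => b2R (S i' k') * Tm h d adj n a e i k i' k'))
                   <= DS h K (fun i' k' => b2R (S i' k') * Rabs (Tm h d adj n a e i k i' k'))).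
      { eapply Rle_trans. apply DS_abs. right. apply DS_ext; intros.
        rewrite Rabs_mult. f_equal. destruct (S i0 k0); cbn; [apply Rabs_R1| apply Rabs_R0]. }
      replace (GS h d adj n K a e S - GS h d adj n K a e S')
        with ((GS h d adj n K a e S - GS h d adj n K a e S1) + (GS h d adj n K a e S1 - GS h d adj n K a e S')) by ring.
      eapply Rle_trans. apply Rabs_triang.
      rewrite HR, Rabs_mult, (Rabs_right 2) by lra.
      rewrite HP in HG'. lra.
Qed.

Theorem proposition5p3 :
  forall (n h d : nat) (adj : nat -> nat -> bool) (L : R) (k0 : nat)
    (a : nat -> nat -> nat) (e : nat -> nat -> nat -> nat -> nat),
  (2 <= d)%nat ->
  simple_graph adj ->
  regular h d adj ->
  20 <= L ->
  is_pattern h d adj n k0 a e ->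
  exists S : nat -> nat -> bool,
    pSD h d adj n (Kb k0 d) (subA S a) (subE S e)
      >= pSD h d adj n (Kb k0 d) a e - 55 * L * sqrt (INR d) /\
    (forall i k, (i < h)%nat -> S i k = true ->
      sumR h (fun i' => sumR (Kb k0 d) (fun k' =>
        indR (SDE h d adj n a e i k i' k' /\ S i' k' = true) *
        (INR (a i k) * INR (a i' k') / INR n * (eps n a e i k i' k' ^ 2 / 15))))
      >= L / 10 * alog n (a i k)).
Proof.
  intros n h d adj L k0 a e Hd Hsg Hr HL Hpat.
  destruct Hpat as (_ & Hsum & Hy & He).
  set (K := Kb k0 d) in *.
  assert (Han : forall i k, (i < h)%nat -> (k < K)%nat -> (a i k <= n)%nat).
  { intros i k Hi Hk. apply INR_le. eapply Rle_trans; [|apply (Hsum i Hi)].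
    apply (sumR_single_le K k (fun k => INR (a i k))); auto. intros; apply pos_INR. }
  assert (Hes : forall i k i' k', GammaE h d adj i k i' k' -> e i k i' k' = e i' k' i k)
    by (intros; apply He; auto).
  assert (Hbox : inbox h K (box h K)).
  { intros i k H. unfold box in H. apply andb_prop in H as [H1 H2].
    apply Nat.ltb_lt in H1; apply Nat.ltb_lt in H2; auto. }
  assert (Hc : cnt h K (box h K) <= INR (h * K)).
  { unfold cnt. apply Rle_trans with (DS h K (fun _ _ => 1)).
    apply DS_le; intros; apply b2R_le1.
    unfold DS. rewrite (sumR_ext h _ (fun _ => INR K * 1)) by (intros; apply sumR_const).
    rewrite sumR_const, mult_INR. lra. }
  destruct (greedy h d adj n K a e L Hd Hsg Hes Han ltac:(lra) (h * K) (box h K) Hbox Hc)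
    as [S' [G HG]].
  exists S'. split.
  - rewrite pSD_sub, pSD_full.
    assert (HPb : PS h K adj n a L (box h K) <= 55 * L * sqrt (INR d)).
    { unfold PS. apply Rle_trans with (DS h K (fun i k => Dv n h K adj a L i k)).
      right. apply DS_ext; intros. rewrite b2R_box by auto. ring.
      apply final_bound; auto. }
    assert (HPs : 0 <= PS h K adj n a L S').
    { unfold PS. apply DS_nonneg; intros. apply Rmult_le_pos. apply b2R_nonneg. apply Dv_nonneg. }
    set (G1 := GS h d adj n K a e (box h K)) in *.
    set (G2 := GS h d adj n K a e S') in *.
    assert (Rabs (/ 2 * G1) <= Rabs (/ 2 * G2) + Rabs (/ 2 * (G1 - G2))).
    { replace (/ 2 * G1) with (/ 2 * G2 + / 2 * (G1 - G2)) at 1 by ring. apply Rabs_triang. }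
    assert (Rabs (/ 2 * (G1 - G2)) = / 2 * Rabs (G1 - G2)).
    { rewrite Rabs_mult, (Rabs_right (/ 2)) by lra. reflexivity. }
    lra.
  - intros i k Hi HS. apply G; auto.
Qed.
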